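(* Let $\mathcal{F}:\mathcal{T}^Y\to\mathcal{T}^Z$ be a (holomorphic, projective) cover between trees of spheres with portrait $\mathbf{F}$ and of degree $D$. Let $v$ be an internal vertex of $T^Y$ with $\deg(v)=D$, and let $(f_n,y_n,z_n)_n$ be a sequence of rational maps marked by $\mathbf{F}$ converging to $\mathcal{F}$ via $(\phi^Y_n,\phi^Z_n)$. Then $\phi^Z_{n,F(v)}\circ f_n\circ(\phi^Y_{n,v})^{-1}:\mathbb{S}_v\to\mathbb{S}_{F(v)}$ converges uniformly on $\mathbb{S}_v$ to $f_v$.
   Context: Trees: finite connected graphs without cycles (vertices $V$, edges $2$-element subsets, $E_v$ the edges at $v$); leaves have valence $1$, the others are internal ($IV$); trees are stable (internal vertices have valence $\ge3$). For $e\in E_v$, $B_v(e)$ is the component of the tree minus $v$ containing $e$. A projective tree of spheres $\mathcal{T}^X$ marked by a finite set $X$ ($\ge3$ elements) is a tree $T^X$ with leaf set $X$ and, for each internal vertex $v$, a sphere $\mathbb{S}_v$ with a projective structure and an injection $i_v:E_v\to\mathbb{S}_v$; $X_v=i_v(E_v)$; $a_v(x)=i_v(e)$ for $x\in B_v(e)$. A holomorphic cover $\mathcal{F}:\mathcal{T}^Y\to\mathcal{T}^Z$: a map $F:T^Y\to T^Z$ sending vertices to vertices and edges $\{v,w\}$ to edges $\{F(v),F(w)\}$, $Y$ into $Z$ and $IV^Y$ into $IV^Z$, with holomorphic branched coverings $f_v:\mathbb{S}_v\to\mathbb{S}_{F(v)}$ ($v\in IV^Y$) which restrict to coverings $\mathbb{S}_v\setminus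 Y_v\to\mathbb{S}_{F(v)}\setminus Z_{F(v)}$, satisfy $f_v\circ i_v=i_{F(v)}\circ F$ on $E_v$, and have equal local degrees at both attaching points of an edge between internal vertices. $\deg(v)=\deg f_v$; for a leaf $y$ attached to internal $v$ by $e$, $\deg(y)=\deg_{i_v(e)}f_v$. The degree $D$ is $\sum_{v'\in F^{-1}(w)}\deg(v')$, independent of the vertex $w$. The portrait of $\mathcal{F}$ is $(F|_Y,\deg|_Y)$. A portrait of degree $D$ is $\mathbf{F}=(F,\deg)$, $F:Y\to Z$, $\deg:Y\to\mathbb{N}\setminus\{0\}$ with $\sum_{a\in Y}(\deg(a)-1)=2D-2$ and $\sum_{a\in F^{-1}(b)}\deg(a)=D$ for all $b\in Z$. A rational map marked by $\mathbf{F}$ is $(f,y,z)$ with $f$ rational of degree $D$, $y:Y\to\hat{\mathbb{C}}$ and $z:Z\to\hat{\mathbb{C}}$ injective, $f\circ y=z\circ F$ and $\deg_{y(a)}f=\deg(a)$. Convergence: $(f_n,y_n,z_n)\to\mathcal{F}$ via $(\phi^Y_n,\phi^Z_n)$ if the $(f_n,y_n,z_n)$ are marked by the portrait of $\mathcal{F}$ and for each $v\in IV^Y$, $w=F(v)$, there are projective isomorphisms $\phi^Y_{n,v}:\hat{\mathbb{C}}\to\mathbb{S}_v$, $\phi^Z_{n,w}:\hat{\mathbb{C}}\to\mathbb{S}_w$ with $\phi^Y_{n,v}\circ y_n\to a^Y_v$, $\phi^Z_{n,w}\circ z_n\to a^Z_w$, and $\phi^Z_{n,w}\circ f_n\circ(\phi^Y_{n,v})^{-1}\to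 f_v$ locally uniformly on $\mathbb{S}_v\setminus Y_v$. *)

(* Defs.v *)
From HB Require Import structures.
From mathcomp Require Import all_boot all_order all_algebra.
From mathcomp Require Import complex reals.
Set Implicit Arguments. Unset Strict Implicit. Unset Printing Implicit Defensive.
Import Order.TTheory GRing.Theory Num.Theory.
Local Open Scope ring_scope.

Section Sphere.
Variable R : realType.
Local Notation C := (R[i]).

(* The Riemann sphere: None is the point at infinity. *)
Definition sphere := option C.

Definition nsq (z : C) : R := (@complex.Re R z) ^+ 2 + (@complex.Im R z) ^+ 2.

Definition chord (a b : sphere) : R :=
  match a, b with
  | Some z, Some w => 2 * Num.sqrt (nsq (z - w)) / Num.sqrt ((1 + nsq z) * (1 + nsq w))
  | Some z, None | None, Some z => 2 / Num.sqrt (1 + nsq z)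
  | None, None => 0
  end.

(* A rational map is given by a pair (numerator, denominator). *)
Definition ratmap := ({poly C} * {poly C})%type.

Definition rdeg (m : ratmap) : nat := (maxn (size m.1) (size m.2)).-1.

Definition is_ratmap (m : ratmap) : bool := coprimep m.1 m.2 && (0 < rdeg m)%N.

(* t^D p(1/t), D = rdeg m : the chart at infinity *)
Definition revp (m : ratmap) (p : {poly C}) : {poly C} :=
  \poly_(k < (rdeg m).+1) p`_(rdeg m - k).

Definition ev_fin (p q : {poly C}) (z : C) : sphere :=
  if q.[z] != 0 then Some (p.[z] / q.[z]) else None.

Definition ev (m : ratmap) (s : sphere) : sphere :=
  match s with
  | Some z => ev_fin m.1 m.2 z
  | None => ev_fin (revp m m.1) (revp m m.2) 0
  end.

Definition ldeg_fin (p q : {poly C}) (z : C) : nat :=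
  match ev_fin p q z with
  | Some w => mup z (p - w%:P * q)
  | None => mup z q
  end.

Definition ldeg (m : ratmap) (s : sphere) : nat :=
  match s with
  | Some z => ldeg_fin m.1 m.2 z
  | None => ldeg_fin (revp m m.1) (revp m m.2) 0
  end.

(* projective isomorphisms of the sphere = Moebius maps = rational maps of degree 1 *)
Definition is_mobius (m : ratmap) : bool := is_ratmap m && (rdeg m == 1%N).

(* inverse of z |-> (a z + b) / (c z + d) is z |-> (d z - b) / (- c z + a) *)
Definition mobinv (m : ratmap) : ratmap :=
  let a := m.1`_1 in let b := m.1`_0 in let c := m.2`_1 in let d := m.2`_0 in
  (d *: 'X - b%:P, (- c) *: 'X + a%:P).

Definition sconv (u : nat -> sphere) (l : sphere) : Prop :=
  forall eps : R, 0 < eps -> exists N, forall n, (N <= n)%N -> chord (u n) l < eps.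

Definition unif_conv (g : nat -> sphere -> sphere) (f : sphere -> sphere) : Prop :=
  forall eps : R, 0 < eps -> exists N, forall n, (N <= n)%N ->
    forall s, chord (g n s) (f s) < eps.

Definition loc_unif_conv_off (A : sphere -> Prop)
    (g : nat -> sphere -> sphere) (f : sphere -> sphere) : Prop :=
  forall p, ~ A p -> exists2 r : R, 0 < r &
    forall eps : R, 0 < eps -> exists N, forall n, (N <= n)%N ->
      forall s, chord s p < r -> chord (g n s) (f s) < eps.

End Sphere.

Definition is_tree (V : finType) (e : rel V) : Prop :=
  [/\ symmetric e, irreflexive e, (forall a b, connect e a b) &
      (forall s : seq V, uniq s -> (3 <= size s)%N -> ~~ cycle e s)].

Definition valence (V : finType) (e : rel V) (a : V) : nat := #|[set b | e a b]|.

Definition in_branch (V : finType) (e : rel V) (v u x : V) : bool :=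
  connect [rel a b | e a b && (a != v) && (b != v)] u x.

(* A projective tree of spheres marked by X: vertices are X + I
   (inl = leaves, labelled by X; inr = internal vertices), every sphere
   S_v is the Riemann sphere with its standard projective structure;
   att v u = i_v({v,u}) is the attaching point of the edge {v,u} in S_v. *)
Definition is_sphere_tree (R : realType) (X I : finType) (e : rel (X + I))
    (att : I -> X + I -> sphere R) : Prop :=
  [/\ is_tree e, (3 <= #|X|)%N,
      (forall x : X, valence e (inl x) = 1%N),
      (forall v : I, (3 <= valence e (inr v))%N) &
      (forall v : I, forall u u', e (inr v) u -> e (inr v) u' ->
          att v u = att v u' -> u = u')].

Definition marked_pts (R : realType) (X I : finType) (e : rel (X + I))
    (att : I -> X + I -> sphere R) (v : I) (s : sphere R) : Prop :=
  exists2 u, e (inr v) u & s = att v u.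

Definition vmap (Y Z IY IZ : finType) (FY : Y -> Z) (FI : IY -> IZ)
    (a : Y + IY) : Z + IZ :=
  match a with inl y => inl (FY y) | inr v => inr (FI v) end.

Definition vdeg (R : realType) (Y IY : finType) (fv : IY -> ratmap R)
    (dY : Y -> nat) (a : Y + IY) : nat :=
  match a with inl y => dY y | inr v => rdeg (fv v) end.

(* Holomorphic cover F : T^Y -> T^Z of degree D with portrait (FY, dY).
   The map on vertices is vmap FY FI (sends leaves to leaves, internal
   vertices to internal vertices); fv v : S_v -> S_{F v} is a rational map;
   dY y = deg(y) is the local degree at the attaching point of the leaf y. *)
Definition is_cover (R : realType) (Y IY Z IZ : finType)
    (eY : rel (Y + IY)) (attY : IY -> Y + IY -> sphere R)
    (eZ : rel (Z + IZ)) (attZ : IZ -> Z + IZ -> sphere R)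
    (FY : Y -> Z) (FI : IY -> IZ) (fv : IY -> ratmap R) (dY : Y -> nat)
    (D : nat) : Prop :=
  let F := vmap FY FI in
  [/\ (forall a b, eY a b -> eZ (F a) (F b)),
      (forall v, is_ratmap (fv v)) &
    [/\
      (* f_v restricts to a covering S_v \ Y_v -> S_{F v} \ Z_{F v} *)
      (forall v s, marked_pts eZ attZ (FI v) (ev (fv v) s) <-> marked_pts eY attY v s),
      (forall v s, ~ marked_pts eY attY v s -> ldeg (fv v) s = 1%N) &
    [/\
      (forall v u, eY (inr v) u -> ev (fv v) (attY v u) = attZ (FI v) (F u)),
      (forall v w, eY (inr v) (inr w) ->
          ldeg (fv v) (attY v (inr w)) = ldeg (fv w) (attY w (inr v))),
      (forall y v, eY (inl y) (inr v) -> dY y = ldeg (fv v) (attY v (inl y))) &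
      (forall w : Z + IZ, (\sum_(a | F a == w) vdeg fv dY a)%N = D)]]].

Definition marked_by (R : realType) (Y Z : finType) (FY : Y -> Z) (dY : Y -> nat)
    (D : nat) (f : ratmap R) (y : Y -> sphere R) (z : Z -> sphere R) : Prop :=
  [/\ is_ratmap f, rdeg f = D, injective y, injective z &
      (forall a, ev f (y a) = z (FY a) /\ ldeg f (y a) = dY a)].

Definition converges_to (R : realType) (Y IY Z IZ : finType)
    (eY : rel (Y + IY)) (attY : IY -> Y + IY -> sphere R)
    (eZ : rel (Z + IZ)) (attZ : IZ -> Z + IZ -> sphere R)
    (FY : Y -> Z) (FI : IY -> IZ) (fv : IY -> ratmap R) (dY : Y -> nat) (D : nat)
    (f : nat -> ratmap R) (y : nat -> Y -> sphere R) (z : nat -> Z -> sphere R)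
    (phiY : nat -> IY -> ratmap R) (phiZ : nat -> IZ -> ratmap R) : Prop :=
  (forall n, marked_by FY dY D (f n) (y n) (z n)) /\
  forall v : IY, let w := FI v in
  [/\ (forall n, is_mobius (phiY n v)), (forall n, is_mobius (phiZ n w)),
      (forall (a : Y) u, eY (inr v) u -> in_branch eY (inr v) u (inl a) ->
          sconv (fun n => ev (phiY n v) (y n a)) (attY v u)),
      (forall (b : Z) u, eZ (inr w) u -> in_branch eZ (inr w) u (inl b) ->
          sconv (fun n => ev (phiZ n w) (z n b)) (attZ w u)) &
      loc_unif_conv_off (marked_pts eY attY v)
        (fun n s => ev (phiZ n w) (ev (f n) (ev (mobinv (phiY n v)) s)))
        (ev (fv v))].

(* Main.v *)
Require Import Defs.
From HB Require Import structures.
From mathcomp Require Import all_boot all_order all_algebra.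
From mathcomp Require Import complex reals.
From mathcomp Require Import ring lra zify.
Set Implicit Arguments. Unset Strict Implicit. Unset Printing Implicit Defensive.
Import Order.TTheory GRing.Theory Num.Theory.
Import ComplexField.Normc.
Local Open Scope ring_scope.

Section Main.
Variable R : realType.
Implicit Types (P Q l : {poly R[i]}) (x y : R[i]).
Local Notation C := (R[i]).
Local Notation sph := (sphere R).

Definition proj (a b : C) : sph := if b != 0 then Some (a / b) else None.

Lemma proj_scale (l a b : C) : l != 0 -> proj (l * a) (l * b) = proj a b.
Proof.
move=> l0; rewrite /proj mulf_eq0 negb_or l0 /=.
case: ifP => // _; congr Some.
by rewrite invfM mulrACA divff // mul1r.
Qed.

Definition hev (d : nat) (P : {poly C}) (x y : C) : C :=
  \sum_(k < d.+1) P`_k * x ^+ k * y ^+ (d - k).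

Lemma hev_y1 d P x : (size P <= d.+1)%N -> hev d P x 1 = P.[x].
Proof.
move=> hs; rewrite /hev (horner_coef_wide _ hs); apply: eq_bigr => k _.
by rewrite expr1n mulr1.
Qed.

Lemma hev_x0 d P x : hev d P x 0 = P`_d * x ^+ d.
Proof.
rewrite /hev big_ord_recr /= subnn expr0 mulr1 big1 ?add0r // => k _.
by rewrite expr0n subn_eq0 leqNgt ltn_ord /= mulr0.
Qed.

Lemma hev_scale d P (l : C) x y : hev d P (l * x) (l * y) = l ^+ d * hev d P x y.
Proof.
rewrite /hev mulr_sumr; apply: eq_bigr => k _.
have e : l ^+ d = l ^+ k * l ^+ (d - k) by rewrite -exprD subnKC // -ltnS.
by rewrite !exprMn e; ring.
Qed.

Lemma hev_yz d P x y : (size P <= d.+1)%N -> y != 0 ->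
  hev d P x y = y ^+ d * P.[x / y].
Proof.
move=> hs y0.
have -> : hev d P x y = hev d P (y * (x / y)) (y * 1) by rewrite mulr1 mulrC divfK.
by rewrite hev_scale hev_y1.
Qed.

Lemma hevD d P Q x y : hev d (P + Q) x y = hev d P x y + hev d Q x y.
Proof.
by rewrite /hev -big_split; apply: eq_bigr => k _; rewrite coefD !mulrDl.
Qed.

Lemma hevZ d (a : C) P x y : hev d (a *: P) x y = a * hev d P x y.
Proof.
by rewrite /hev mulr_sumr; apply: eq_bigr => k _; rewrite coefZ !mulrA.
Qed.

Lemma hev_sum d n (F : 'I_n -> {poly C}) x y :
  hev d (\sum_(i < n) F i) x y = \sum_(i < n) hev d (F i) x y.
Proof.
rewrite /hev exchange_big /=; apply: eq_bigr => k _.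
by rewrite coef_sum !mulr_suml.
Qed.

Lemma coefM_top (P Q : {poly C}) a b : (size P <= a.+1)%N -> (size Q <= b.+1)%N ->
  (P * Q)`_(a + b) = P`_a * Q`_b.
Proof.
move=> hP hQ; rewrite coefM.
have ha : (a < (a + b).+1)%N by rewrite ltnS leq_addr.
rewrite (bigD1 (Ordinal ha)) //= addKn big1 ?addr0 // => i /eqP ne.
have [lt|gt] := ltnP i a.
  rewrite [Q`_ _]nth_default ?mulr0 //.
  apply: leq_trans hQ _; have := ltn_ord i; lia.
rewrite [P`_ _]nth_default ?mul0r //; apply: leq_trans hP _.
rewrite ltn_neqAle gt andbT eq_sym; apply/eqP => e; apply: ne; exact: val_inj.
Qed.

Lemma hevM a b P Q x y : (size P <= a.+1)%N -> (size Q <= b.+1)%N ->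
  hev (a + b) (P * Q) x y = hev a P x y * hev b Q x y.
Proof.
move=> hP hQ.
have hPQ : (size (P * Q)%R <= (a + b).+1)%N.
  have := size_polyMleq P Q; lia.
have [->|y0] := eqVneq y 0.
  by rewrite !hev_x0 coefM_top // exprD; ring.
by rewrite !hev_yz // hornerM exprD; ring.
Qed.

Lemma hev1 P x y : hev 1 P x y = P`_0 * y + P`_1 * x.
Proof. by rewrite /hev !big_ord_recr big_ord0 /= add0r !expr0 !expr1 !mulr1. Qed.

Lemma hev_pow k l x y : (size l <= 2)%N -> hev k (l ^+ k) x y = (hev 1 l x y) ^+ k.
Proof.
move=> hl; elim: k => [|k IH].
  by rewrite /hev big_ord1 !expr0 coefC /= !mulr1.
have hk : (size (l ^+ k) <= k.+1)%N.
  apply: leq_trans (size_poly_exp_leq _ _) _; rewrite ltnS.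
  by case: (size l) hl => [|[|[|]]] //= _; rewrite ?mul0n ?mul1n.
by rewrite [in RHS]exprSr -IH -hevM // addn1 exprSr.
Qed.

Definition subst d (P l1 l2 : {poly C}) : {poly C} :=
  \sum_(k < d.+1) P`_k *: (l1 ^+ k * l2 ^+ (d - k)).

Lemma size_subst d P (l1 l2 : {poly C}) : (size l1 <= 2)%N -> (size l2 <= 2)%N ->
  (size (subst d P l1 l2) <= d.+1)%N.
Proof.
move=> h1 h2; rewrite /subst; apply: leq_trans (size_sum _ _ _) _.
apply/bigmax_leqP => k _.
apply: leq_trans (size_scale_leq _ _) _.
apply: leq_trans (size_polyMleq _ _) _.
have e : forall l n, (size l <= 2)%N -> (size (l ^+ n) <= n.+1)%N.
  move=> l n hl; apply: leq_trans (size_poly_exp_leq _ _) _; rewrite ltnS.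
  by case: (size l) hl => [|[|[|]]] //= _; rewrite ?mul0n ?mul1n.
have := e _ k h1; have := e _ (d - k)%N h2; have := ltn_ord k; lia.
Qed.

Lemma size_powl (l : {poly C}) n : (size l <= 2)%N -> (size (l ^+ n) <= n.+1)%N.
Proof.
move=> hl; apply: leq_trans (size_poly_exp_leq _ _) _; rewrite ltnS.
by case: (size l) hl => [|[|[|]]] //= _; rewrite ?mul0n ?mul1n.
Qed.

Lemma hev_subst d P (l1 l2 : {poly C}) x y : (size l1 <= 2)%N -> (size l2 <= 2)%N ->
  hev d (subst d P l1 l2) x y = hev d P (hev 1 l1 x y) (hev 1 l2 x y).
Proof.
move=> h1 h2; rewrite /subst hev_sum.
rewrite [in RHS]/hev; set u := hev 1 l1 x y; set v := hev 1 l2 x y.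
apply: eq_bigr => k _.
have kd : (k <= d)%N by rewrite -ltnS.
have h := hevM x y (size_powl k h1) (size_powl (d - k) h2).
rewrite subnKC // in h.
by rewrite hevZ h (hev_pow k x y h1) (hev_pow (d - k) x y h2) mulrA.
Qed.

End Main.


Section B.
Variable R : realType.
Local Notation C := (R[i]).
Local Notation sph := (sphere R).
Implicit Types (m : ratmap R) (x y : C).

Lemma size_rdeg1 m : (size m.1 <= (rdeg m).+1)%N.
Proof. rewrite /rdeg; have := leq_maxl (size m.1) (size m.2); lia. Qed.
Lemma size_rdeg2 m : (size m.2 <= (rdeg m).+1)%N.
Proof. rewrite /rdeg; have := leq_maxr (size m.1) (size m.2); lia. Qed.

Lemma evP m x y : (x != 0) || (y != 0) ->
  ev m (proj x y) = proj (hev (rdeg m) m.1 x y) (hev (rdeg m) m.2 x y).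
Proof.
case: (eqVneq y 0) => [->|y0] /=.
  rewrite orbF => x0.
  have -> : proj x 0 = None by rewrite /proj eqxx.
  have -> : ev m None = proj (m.1`_(rdeg m)) (m.2`_(rdeg m)).
    by rewrite /= /ev_fin /proj !horner_coef0 /revp !coef_poly /= subn0.
  by rewrite !hev_x0 ![_ * x ^+ _]mulrC proj_scale // expf_neq0.
move=> _; have -> : proj x y = Some (x / y) by rewrite /proj y0.
have -> : ev m (Some (x / y)) = proj m.1.[x / y] m.2.[x / y] by [].
rewrite !hev_yz ?size_rdeg1 ?size_rdeg2 //.
by rewrite proj_scale // expf_neq0.
Qed.

Lemma rdeg_max m : (0 < rdeg m)%N -> maxn (size m.1) (size m.2) = (rdeg m).+1.
Proof. by rewrite /rdeg; case: (maxn _ _). Qed.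

Lemma Hm_neq0 m x y : is_ratmap m -> (x != 0) || (y != 0) ->
  (hev (rdeg m) m.1 x y != 0) || (hev (rdeg m) m.2 x y != 0).
Proof.
case/andP=> cop hr.
case: (eqVneq y 0) => [->|y0] /=.
  rewrite orbF => x0; rewrite !hev_x0 !mulf_eq0 !negb_or !expf_neq0 // !andbT.
  have hM := rdeg_max hr.
  case/orP: (leq_total (size m.2) (size m.1)) => h.
    have e : size m.1 = (rdeg m).+1 by rewrite -hM; apply/esym/maxn_idPl.
    apply/orP; left; have := lead_coef_eq0 m.1; rewrite lead_coefE e /= => ->.
    by rewrite -size_poly_eq0 e.
  have e : size m.2 = (rdeg m).+1 by rewrite -hM; apply/esym/maxn_idPr.
  apply/orP; right; have := lead_coef_eq0 m.2; rewrite lead_coefE e /= => ->.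
  by rewrite -size_poly_eq0 e.
move=> _; rewrite !hev_yz ?size_rdeg1 ?size_rdeg2 // !mulf_eq0 !negb_or !expf_neq0 //=.
case: (eqVneq m.1.[x / y] 0) => hz //=.
by rewrite (coprimep_root cop) //; apply/eqP.
Qed.

Lemma lin_polyE (p : {poly C}) : (size p <= 2)%N -> p = p`_1 *: 'X + (p`_0)%:P.
Proof.
move=> hs; apply/polyP => i; rewrite coefD coefZ coefX coefC.
case: i => [|[|i]] /=; rewrite ?mulr0 ?add0r ?addr0 ?mulr1 //.
by rewrite nth_default //; apply: leq_trans hs _.
Qed.

Lemma size_lin (u v : C) : (size (u *: 'X + v%:P)%R <= 2)%N.
Proof.
apply: leq_trans (size_polyD _ _) _; rewrite geq_max.
rewrite (leq_trans (size_scale_leq _ _)) ?size_polyX //.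
by rewrite (leq_trans (size_polyC_leq1 _)).
Qed.

Lemma size_lin2 (u v : C) : u != 0 -> size (u *: 'X + v%:P)%R = 2%N.
Proof.
move=> u0; apply/eqP; rewrite eqn_leq size_lin /=.
have : (u *: 'X + v%:P)`_1 != 0 by rewrite coefD coefZ coefX coefC /= mulr1 addr0.
by apply: contraR; rewrite -leqNgt => h; rewrite nth_default.
Qed.

Definition mA m := m.1`_1.
Definition mB m := m.1`_0.
Definition mC m := m.2`_1.
Definition mD m := m.2`_0.

Lemma hev_mob m x y : rdeg m = 1%N ->
  hev (rdeg m) m.1 x y = mB m * y + mA m * x /\
  hev (rdeg m) m.2 x y = mD m * y + mC m * x.
Proof. by move=> ->; rewrite !hev1. Qed.

Lemma mob_det m : is_mobius m -> mA m * mD m - mB m * mC m != 0.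
Proof.
case/andP=> hr /eqP r1.
have H := Hm_neq0 hr; have hm := fun x y => @hev_mob m x y r1.
apply/eqP => e.
have K : forall x y, (x != 0) || (y != 0) ->
    mB m * y + mA m * x = 0 -> mD m * y + mC m * x = 0 -> False.
  move=> x y xy h1 h2; have := H x y xy; case: (hm x y) => -> ->.
  by rewrite h1 h2 eqxx.
have [c0|c0] := eqVneq (mC m) 0; have [d0|d0] := eqVneq (mD m) 0.
- have [a0|a0] := eqVneq (mA m) 0.
    apply: (K 1 0).
    + by rewrite oner_eq0.
    + by rewrite a0; ring.
    + by rewrite c0; ring.
  apply: (K (mB m) (- mA m)).
  + by rewrite oppr_eq0 a0 orbT.
  + ring.
  + by rewrite c0 d0; ring.
- apply: (K (mD m) (- mC m)).
  + by rewrite d0.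
  + by rewrite -e; ring.
  + ring.
- apply: (K (mD m) (- mC m)).
  + by rewrite oppr_eq0 c0 orbT.
  + by rewrite -e; ring.
  + ring.
- apply: (K (mD m) (- mC m)).
  + by rewrite d0.
  + by rewrite -e; ring.
  + ring.
Qed.

Lemma mobinvE m : mobinv m = (mD m *: 'X + (- mB m)%:P, (- mC m) *: 'X + (mA m)%:P).
Proof. by rewrite /mobinv polyCN. Qed.

Lemma mobinv_rdeg m : is_mobius m -> rdeg (mobinv m) = 1%N.
Proof.
move=> hm; have dt := mob_det hm; rewrite mobinvE /rdeg /=.
have s1 := size_lin (mD m) (- mB m); have s2 := size_lin (- mC m) (mA m).
have [d0|d0] := eqVneq (mD m) 0.
  have [c0|c0] := eqVneq (mC m) 0.
    by move: dt; rewrite d0 c0 !mulr0 subrr eqxx.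
  by rewrite (size_lin2 _ (_ : - mC m != 0)) ?oppr_eq0 // (maxn_idPr s1).
by rewrite (size_lin2 _ d0) (maxn_idPl s2).
Qed.

Lemma mobinv_neq0 m x y : is_mobius m -> (x != 0) || (y != 0) ->
  (hev (rdeg (mobinv m)) (mobinv m).1 x y != 0) ||
  (hev (rdeg (mobinv m)) (mobinv m).2 x y != 0).
Proof.
move=> hm xy; rewrite mobinv_rdeg // !hev1 mobinvE /=.
rewrite !coefD !coefZ !coefX !coefC /= !mulr0 !mulr1 !add0r !addr0.
have dt := mob_det hm.
apply: contraTT xy; rewrite negb_or !negbK => /andP[/eqP e1 /eqP e2].
have ex : (mA m * mD m - mB m * mC m) * x = 0.
  have -> : (mA m * mD m - mB m * mC m) * x =
     mA m * (- mB m * y + mD m * x) + mB m * (mA m * y + - mC m * x) by ring.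
  by rewrite e1 e2; ring.
have ey : (mA m * mD m - mB m * mC m) * y = 0.
  have -> : (mA m * mD m - mB m * mC m) * y =
     mC m * (- mB m * y + mD m * x) + mD m * (mA m * y + - mC m * x) by ring.
  by rewrite e1 e2; ring.
move/eqP: ex; rewrite mulf_eq0 (negPf dt) /= => ->.
by move/eqP: ey; rewrite mulf_eq0 (negPf dt) /= => /eqP ->; rewrite eqxx.
Qed.

End B.


Section Cc.
Variable R : realType.
Local Notation C := (R[i]).
Local Notation sph := (sphere R).
Implicit Types (m : ratmap R) (x y : C).

Lemma size_lincomb (a b : C) (P Q : {poly C}) n :
  (size P <= n)%N -> (size Q <= n)%N -> (size (a *: P + b *: Q)%R <= n)%N.
Proof.
move=> hP hQ; apply: leq_trans (size_polyD _ _) _; rewrite geq_max.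
by rewrite !(leq_trans (size_scale_leq _ _)).
Qed.

Lemma comp_form (phi1 f phi2 : ratmap R) : is_mobius phi1 -> is_ratmap f -> is_mobius phi2 ->
  exists A B : {poly C}, [/\ (size A <= (rdeg f).+1)%N, (size B <= (rdeg f).+1)%N &
   forall x y, (x != 0) || (y != 0) ->
    ev phi2 (ev f (ev (mobinv phi1) (proj x y))) =
      proj (hev (rdeg f) A x y) (hev (rdeg f) B x y) /\
    ((hev (rdeg f) A x y != 0) || (hev (rdeg f) B x y != 0))].
Proof.
move=> h1 hf h2.
have r1 := mobinv_rdeg h1; have r2 : rdeg phi2 = 1%N by case/andP: h2 => _ /eqP.
set l1 := (mobinv phi1).1; set l2 := (mobinv phi1).2.
have s1 : (size l1 <= 2)%N by have := size_rdeg1 (mobinv phi1); rewrite r1.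
have s2 : (size l2 <= 2)%N by have := size_rdeg2 (mobinv phi1); rewrite r1.
set D := rdeg f.
set S1 := subst D f.1 l1 l2; set S2 := subst D f.2 l1 l2.
exists (mA phi2 *: S1 + mB phi2 *: S2), (mC phi2 *: S1 + mD phi2 *: S2).
have hS1 : (size S1 <= D.+1)%N by apply: size_subst.
have hS2 : (size S2 <= D.+1)%N by apply: size_subst.
split; try by apply: size_lincomb.
move=> x y xy.
set F1 := hev D f.1 (hev 1 l1 x y) (hev 1 l2 x y).
set F2 := hev D f.2 (hev 1 l1 x y) (hev 1 l2 x y).
have eA : hev D (mA phi2 *: S1 + mB phi2 *: S2) x y = mB phi2 * F2 + mA phi2 * F1.
  by rewrite hevD !hevZ !hev_subst // addrC.
have eB : hev D (mC phi2 *: S1 + mD phi2 *: S2) x y = mD phi2 * F2 + mC phi2 * F1.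
  by rewrite hevD !hevZ !hev_subst // addrC.
rewrite eA eB.
have e1 := evP (mobinv phi1) xy; rewrite r1 in e1.
have n1 := mobinv_neq0 h1 xy; rewrite r1 in n1.
rewrite e1 (evP f n1).
have n2 := Hm_neq0 hf n1.
rewrite (evP phi2 n2).
have n3 := Hm_neq0 (proj1 (andP h2)) n2.
have [E1 E2] := hev_mob F1 F2 r2.
by rewrite E1 E2 in n3 *.
Qed.

End Cc.


Section Dd.
Variable R : realType.
Local Notation C := (R[i]).

Lemma interp_unique (p q a b : {poly C}) (D : nat) (zs : seq C) :
  coprimep p q -> maxn (size p) (size q) = D.+1 -> (0 < D)%N ->
  (size a <= D.+1)%N -> (size b <= D.+1)%N ->
  uniq zs -> size zs = (D + D).+1 ->
  (forall z, z \in zs -> a.[z] * q.[z] = b.[z] * p.[z]) ->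
  exists k : C, a = k *: p /\ b = k *: q.
Proof.
move=> cop hM D0 ha hb uz sz hz.
have p0 : p != 0.
  apply/eqP => p0; move: cop; rewrite p0 coprime0p -size_poly_eq1 => /eqP s1.
  by move: hM; rewrite p0 size_poly0 s1 max0n => -[] D0'; rewrite -D0' in D0.
have q0 : q != 0.
  apply/eqP => q0; move: cop; rewrite q0 coprimep0 -size_poly_eq1 => /eqP s1.
  by move: hM; rewrite q0 size_poly0 s1 maxn0 => -[] D0'; rewrite -D0' in D0.
have e : a * q = b * p.
  apply/eqP; rewrite -subr_eq0; apply/negPn/negP => ne.
  have hr : all (root (a * q - b * p)) zs.
    by apply/allP => z hz'; rewrite /root hornerD hornerN !hornerM hz // subrr.
  have := max_poly_roots ne hr uz; rewrite sz.
  have s1 := size_polyMleq a q; have s2 := size_polyMleq b p.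
  have s3 := size_polyD (a * q) (- (b * p)); rewrite size_polyN in s3.
  have sp : (size p <= D.+1)%N by rewrite -hM leq_maxl.
  have sq : (size q <= D.+1)%N by rewrite -hM leq_maxr.
  have hx : (size (a * q - b * p)%R <= (D + D).+1)%N.
    apply: leq_trans s3 _; rewrite geq_max; apply/andP; split.
      by apply: leq_trans s1 _; lia.
    by apply: leq_trans s2 _; lia.
  by rewrite ltnNge hx.
have pa : p %| a by rewrite -(Gauss_dvdpl _ cop) e dvdp_mull.
case/dvdpP: pa => k ek.
have eb : b = k * q.
  by apply: (mulIf p0); rewrite -e ek mulrAC.
have [k0|k0] := eqVneq k 0.
  by exists 0; rewrite ek eb k0 !mul0r !scale0r.
have sa := size_mul k0 p0; have sb := size_mul k0 q0.
rewrite -ek in sa; rewrite -eb in sb.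
have sk : (size k <= 1)%N.
  move: sa sb ha hb hM; move: (size k) (size p) (size q) (size a) (size b) => n1 n2 n3 n4 n5.
   lia.
exists k`_0; rewrite ek eb {1 3}(size1_polyC sk) !mul_polyC; split=> //.
Qed.

Lemma pick_pt (L : seq C) (Q : {poly C}) : Q != 0 ->
  exists k : nat, (k%:R \notin L) && (Q.[k%:R] != 0).
Proof.
move=> Q0; have [rs ers] := closed_field_poly_normal Q.
set B := L ++ rs.
have [k hk] : exists k : nat, (k%:R : C) \notin B.
  case: (boolP [forall i : 'I_(size B).+1, (i%:R : C) \in B]) => [/forallP H|/forallPn [i hi]];
    last by exists i.
  have : (size (map (fun i : nat => (i%:R : C)) (iota 0 (size B).+1)) <= size B)%N.
    apply: uniq_leq_size.
      by rewrite map_inj_uniq ?iota_uniq // => m n /eqP; rewrite eqr_nat => /eqP.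
    move=> z hz; have [i hi ->] := mapP hz; move: hi; rewrite mem_iota add0n => /andP [_ hi]; exact: (H (Ordinal hi)).
  by rewrite size_map size_iota ltnn.
exists k; move: hk; rewrite mem_cat negb_or => /andP [h1 h2]; rewrite h1 /=.
rewrite ers hornerZ mulf_eq0 negb_or lead_coef_eq0 Q0 /=.
by have := root_prod_XsubC rs (k%:R); rewrite /root => ->.
Qed.

Lemma pick_pts (L : seq C) (Q : {poly C}) n : Q != 0 ->
  exists zs : seq C, [/\ size zs = n, uniq zs &
    forall z, z \in zs -> (z \notin L) && (Q.[z] != 0)].
Proof.
move=> Q0; elim: n => [|n [zs [sz uz hz]]]; first by exists [::].
have [k /andP [hk hq]] := pick_pt (L ++ zs) Q0.
move: hk; rewrite mem_cat negb_or => /andP [hL hzs].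
exists (k%:R :: zs); split => /=; first by rewrite sz.
  by rewrite uz hzs.
by move=> z; rewrite in_cons => /orP [/eqP -> | /hz //]; rewrite hq hL.
Qed.

End Dd.


Section E.
Variable R : realType.
Local Notation C := (R[i]).
Local Notation nc := (@normc R).

Lemma nc_ge0 (z : C) : 0 <= nc z.
Proof. by case: z => a b; rewrite /normc sqrtr_ge0. Qed.

Lemma nc_sub (x y : C) : nc (x - y) = nc (y - x).
Proof. by rewrite -normcN opprB. Qed.

Lemma nc_gt0 (z : C) : z != 0 -> 0 < nc z.
Proof.
move=> z0; rewrite lt_neqAle nc_ge0 andbT eq_sym; apply/eqP => h.
by move/eqP: z0; apply; apply: eq0_normc.
Qed.

Lemma nc_triB (x y : C) : nc x <= nc (x - y) + nc y.
Proof. by have := le_normcD (x - y) y; rewrite subrK. Qed.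

Definition cv (u : nat -> C) (l : C) :=
  forall e : R, 0 < e -> exists N, forall n, (N <= n)%N -> nc (u n - l) < e.

Lemma cv_cst (l : C) : cv (fun _ => l) l.
Proof. by move=> e e0; exists 0%N => n _; rewrite subrr normc0. Qed.

Lemma cv_ev (u v : nat -> C) l N0 : (forall n, (N0 <= n)%N -> u n = v n) -> cv u l -> cv v l.
Proof.
move=> h cu e e0; have [N hN] := cu e e0; exists (maxn N N0) => n hn.
by rewrite -h ?hN //; move: hn; rewrite geq_max => /andP[].
Qed.

Lemma cv_add u v l m : cv u l -> cv v m -> cv (fun n => u n + v n) (l + m).
Proof.
move=> cu cvv e e0.
have e2 : 0 < e / 2 by rewrite divr_gt0.
have [N1 h1] := cu _ e2; have [N2 h2] := cvv _ e2.
exists (maxn N1 N2) => n; rewrite geq_max => /andP [n1 n2].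
have -> : u n + v n - (l + m) = (u n - l) + (v n - m) by ring.
apply: le_lt_trans (le_normcD _ _) _.
have := h1 _ n1; have := h2 _ n2; lra.
Qed.

Lemma cv_opp u l : cv u l -> cv (fun n => - u n) (- l).
Proof.
move=> cu e e0; have [N h] := cu e e0; exists N => n hn.
by rewrite -opprD normcN h.
Qed.

Lemma cv_mul u v l m : cv u l -> cv v m -> cv (fun n => u n * v n) (l * m).
Proof.
move=> cu cvv e e0.
set K := 1 + nc l + nc m.
have K0 : 0 < K by rewrite /K; have := nc_ge0 l; have := nc_ge0 m; lra.
set d := Num.min 1 (e / K).
have d0 : 0 < d by rewrite /d lt_min ltr01 divr_gt0.
have d1 : d <= 1 by rewrite /d ge_min lexx.
have dK : d * K <= e.
  rewrite /d; have : Num.min 1 (e / K) <= e / K by rewrite ge_min lexx orbT.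
  by rewrite -(ler_pM2r K0) divfK ?gt_eqF.
have [N1 h1] := cu _ d0; have [N2 h2] := cvv _ d0.
exists (maxn N1 N2) => n; rewrite geq_max => /andP [n1 n2].
have -> : u n * v n - l * m = (u n - l) * (v n - m) + (u n - l) * m + l * (v n - m) by ring.
have a1 := h1 _ n1; have a2 := h2 _ n2.
have b1 := nc_ge0 (u n - l); have b2 := nc_ge0 (v n - m).
have bl := nc_ge0 l; have bm := nc_ge0 m.
apply: le_lt_trans (le_normcD _ _) _; rewrite normcM.
apply: le_lt_trans (lerD (le_normcD _ _) (lexx _)) _; rewrite !normcM.
have : nc (u n - l) * nc (v n - m) <= d * d by apply: ler_pM => //; apply: ltW.
have : nc (u n - l) * nc m <= d * nc m by apply: ler_wpM2r => //; apply: ltW.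
have : nc l * nc (v n - m) < nc l * d + d.
  have : nc l * nc (v n - m) <= nc l * d by apply: ler_wpM2l => //; apply: ltW.
  lra.
have : d * d <= d by nra.
move: dK; rewrite /K; nra.
Qed.

Lemma cv_inv u l : l != 0 -> cv u l -> cv (fun n => (u n)^-1) l^-1.
Proof.
move=> l0 cu e e0.
have L0 := nc_gt0 l0.
set d := Num.min (nc l / 2) (e * nc l * nc l / 2).
have d0 : 0 < d by rewrite /d lt_min !divr_gt0 ?mulr_gt0.
have dl : d <= nc l / 2 by rewrite /d ge_min lexx.
have de : d <= e * nc l * nc l / 2 by rewrite /d ge_min lexx orbT.
have [N h] := cu _ d0; exists N => n hn.
have a := h _ hn.
have un : nc l / 2 < nc (u n).
  have := nc_triB l (u n); rewrite nc_sub; lra.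
have u0 : u n != 0 by apply/eqP => u0; move: un; rewrite u0 normc0; lra.
have U0 : 0 < nc (u n) by lra.
have -> : (u n)^-1 - l^-1 = (l - u n) / (u n * l) by field; rewrite u0 l0.
rewrite normcM normcV normcM nc_sub.
rewrite ltr_pdivrMr ?mulr_gt0 //.
have : nc l / 2 * nc l <= nc (u n) * nc l by rewrite ler_pM2r // ltW.
nra.
Qed.

Lemma cv_sum_seq (I : Type) (r : seq I) (P : pred I) (F : nat -> I -> C) (G : I -> C) :
  (forall i, cv (fun n => F n i) (G i)) ->
  cv (fun n => \sum_(i <- r | P i) F n i) (\sum_(i <- r | P i) G i).
Proof.
move=> h; elim: r => [|i r IH].
  rewrite big_nil; apply: (cv_ev (u := fun _ => 0) (N0 := 0)); last exact: cv_cst.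
  by move=> n _; rewrite big_nil.
rewrite big_cons; case hP: (P i).
  apply: (cv_ev (u := fun n => F n i + \sum_(j <- r | P j) F n j) (N0 := 0)).
    by move=> n _; rewrite big_cons hP.
  exact: cv_add.
apply: (cv_ev (u := fun n => \sum_(j <- r | P j) F n j) (N0 := 0)) => //.
by move=> n _; rewrite big_cons hP.
Qed.

Lemma cv_prod_seq (I : Type) (r : seq I) (P : pred I) (F : nat -> I -> C) (G : I -> C) :
  (forall i, cv (fun n => F n i) (G i)) ->
  cv (fun n => \prod_(i <- r | P i) F n i) (\prod_(i <- r | P i) G i).
Proof.
move=> h; elim: r => [|i r IH].
  rewrite big_nil; apply: (cv_ev (u := fun _ => 1) (N0 := 0)); last exact: cv_cst.
  by move=> n _; rewrite big_nil.
rewrite big_cons; case hP: (P i).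
  apply: (cv_ev (u := fun n => F n i * \prod_(j <- r | P j) F n j) (N0 := 0)).
    by move=> n _; rewrite big_cons hP.
  exact: cv_mul.
apply: (cv_ev (u := fun n => \prod_(j <- r | P j) F n j) (N0 := 0)) => //.
by move=> n _; rewrite big_cons hP.
Qed.

End E.


Section F1.
Variable R : realType.
Local Notation C := (R[i]).
Local Notation nc := (@normc R).

Lemma cv_det n (A : nat -> 'M[C]_n) (B : 'M[C]_n) :
  (forall i j, cv (fun k => A k i j) (B i j)) -> cv (fun k => \det (A k)) (\det B).
Proof.
move=> h; rewrite /determinant; apply: cv_sum_seq => s.
apply: cv_mul; first exact: cv_cst.
by apply: cv_prod_seq => i; apply: h.
Qed.

Lemma cv_cofactor n (A : nat -> 'M[C]_n) (B : 'M[C]_n) i j :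
  (forall i j, cv (fun k => A k i j) (B i j)) -> cv (fun k => cofactor (A k) i j) (cofactor B i j).
Proof.
move=> h; rewrite /cofactor; apply: cv_mul; first exact: cv_cst.
apply: cv_det => a b.
apply: (cv_ev (u := fun k => A k (lift i a) (lift j b)) (N0 := 0)).
  by move=> k _; rewrite !mxE.
by rewrite !mxE; apply: h.
Qed.

Lemma cv_invmx n (A : nat -> 'M[C]_n) (B : 'M[C]_n) :
  B \in unitmx -> (forall i j, cv (fun k => A k i j) (B i j)) ->
  exists N0, (forall k, (N0 <= k)%N -> A k \in unitmx) /\
    forall i j, cv (fun k => invmx (A k) i j) (invmx B i j).
Proof.
move=> uB h.
have dB : \det B != 0 by move: uB; rewrite unitmxE unitfE.
have cd := cv_det h.
have [N0 hN] := cd _ (nc_gt0 dB).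
have uA : forall k, (N0 <= k)%N -> A k \in unitmx.
  move=> k hk; rewrite unitmxE unitfE; apply/eqP => d0.
  by move: (hN k hk); rewrite d0 sub0r normcN ltxx.
exists N0; split => // i j.
apply: (cv_ev (u := fun k => (\det (A k))^-1 * cofactor (A k) j i) (N0 := N0)).
  by move=> k hk; rewrite /invmx (uA k hk) !mxE.
rewrite /invmx uB !mxE.
apply: cv_mul; first exact: cv_inv.
exact: cv_cofactor.
Qed.

End F1.

Section F2.
Variable R : realType.
Local Notation C := (R[i]).
Variable D : nat.
Local Notation N := D.+1.
Variable z : nat -> C.

Definition pa (c : 'rV[C]_(N + N)) : {poly C} := \poly_(k < N) c 0 (lshift N (inord k)).
Definition pb (c : 'rV[C]_(N + N)) : {poly C} := \poly_(k < N) c 0 (rshift N (inord k)).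
Definition cvec (a b : {poly C}) : 'rV[C]_(N + N) :=
  \row_(i < N + N) (if (i < N)%N then a`_i else b`_(i - N)).

Lemma pa_cvec (a b : {poly C}) : (size a <= N)%N -> pa (cvec a b) = a.
Proof.
move=> ha; apply/polyP => k; rewrite coef_poly.
case: ifP => hk; last by move/negbT: hk; rewrite -leqNgt => hk; rewrite nth_default //; apply: leq_trans hk.
by rewrite mxE /= inordK // hk.
Qed.

Lemma pb_cvec (a b : {poly C}) : (size b <= N)%N -> pb (cvec a b) = b.
Proof.
move=> hb; apply/polyP => k; rewrite coef_poly.
case: ifP => hk; last by move/negbT: hk; rewrite -leqNgt => hk; rewrite nth_default //; apply: leq_trans hk.
by rewrite mxE /= inordK // ltnNge leq_addr /= addKn.
Qed.

Lemma cvecK c : cvec (pa c) (pb c) = c.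
Proof.
apply/rowP => i; rewrite mxE coef_poly.
case: ifP => hi.
  by rewrite hi; congr (c 0 _); apply: val_inj; rewrite /= inordK.
have hi' : (i - N < N)%N by have := ltn_ord i; move: hi; lia.
rewrite coef_poly hi'; congr (c 0 _); apply: val_inj; rewrite /= inordK //.
by move: hi; lia.
Qed.

Lemma pa_scale (k : C) c : pa (k *: c) = k *: pa c.
Proof. by apply/polyP => i; rewrite coefZ !coef_poly; case: ifP; rewrite ?mxE ?mulr0. Qed.

Lemma pb_scale (k : C) c : pb (k *: c) = k *: pb c.
Proof. by apply/polyP => i; rewrite coefZ !coef_poly; case: ifP; rewrite ?mxE ?mulr0. Qed.

Lemma cvecZ (k : C) (a b : {poly C}) : cvec (k *: a) (k *: b) = k *: cvec a b.
Proof. by apply/rowP => i; rewrite !mxE !coefZ; case: ifP. Qed.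

Definition Smat (w : nat -> C) (j0 : 'I_(N + N)) : 'M[C]_(N + N) :=
  \matrix_(i, j) if (j < (D + D).+1)%N then
     (if (i < N)%N then z j ^+ i else - w j * z j ^+ (i - N))
  else (i == j0)%:R.

Lemma Smat_mul c w j0 j : (c *m Smat w j0) 0 j =
  if (j < (D + D).+1)%N then (pa c).[z j] - w j * (pb c).[z j] else c 0 j0.
Proof.
rewrite !mxE; case: ifP => hj.
  rewrite big_split_ord /=.
  rewrite (horner_coef_wide _ (size_poly _ _)) (horner_coef_wide _ (size_poly _ _)).
  rewrite mulr_sumr -sumrN; congr (_ + _); apply: eq_bigr => k _; rewrite !mxE hj /=.
    by rewrite ltn_ord coef_poly ltn_ord inord_val.
  by rewrite ltnNge leq_addr /= addKn coef_poly ltn_ord inord_val; ring.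
rewrite (bigD1 j0) //= big1 ?addr0 => [|i ne]; rewrite mxE hj ?eqxx ?mulr1 //.
by rewrite (negPf ne) mulr0.
Qed.

Lemma unit_of_inj (S : 'M[C]_(N + N)) :
  (forall c : 'rV_(N + N), c *m S = 0 -> c = 0) -> S \in unitmx.
Proof. by move=> h; rewrite -row_free_unit; apply: inj_row_free. Qed.

End F2.


Section G.
Variable R : realType.
Local Notation C := (R[i]).
Local Notation nc := (@normc R).

Lemma sqrt_sq (x : R) : 0 <= x -> Num.sqrt (x ^+ 2) = x.
Proof. by move=> x0; rewrite sqrtr_sqr ger0_norm. Qed.

Lemma nsq_nc (z : C) : nsq z = nc z ^+ 2.
Proof.
case: z => a b; rewrite /nsq /normc /= sqr_sqrtr //.
by rewrite addr_ge0 // sqr_ge0.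
Qed.

Lemma chord_SS (u w : C) :
  chord (Some u) (Some w) = 2 * nc (u - w) / Num.sqrt ((1 + nc u ^+ 2) * (1 + nc w ^+ 2)).
Proof. by rewrite /chord !nsq_nc sqrt_sq ?nc_ge0. Qed.

Lemma chord_SN (u : C) : chord (Some u) None = 2 / Num.sqrt (1 + nc u ^+ 2).
Proof. by rewrite /chord nsq_nc. Qed.

Lemma chord_NS (u : C) : chord None (Some u) = 2 / Num.sqrt (1 + nc u ^+ 2).
Proof. by rewrite /chord nsq_nc. Qed.

Lemma chord_refl (s : sphere R) : chord s s = 0.
Proof. by case: s => [u|] //; rewrite chord_SS subrr normc0 mulr0 mul0r. Qed.

Definition nrm (x y : C) : R := Num.sqrt (nc x ^+ 2 + nc y ^+ 2).

Lemma nrm_sq x y : nrm x y ^+ 2 = nc x ^+ 2 + nc y ^+ 2.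
Proof. by rewrite /nrm sqr_sqrtr // addr_ge0 // sqr_ge0. Qed.

Lemma nrm_ge0 x y : 0 <= nrm x y.
Proof. exact: sqrtr_ge0. Qed.

Lemma nrm_gt0 x y : (x != 0) || (y != 0) -> 0 < nrm x y.
Proof.
move=> xy; rewrite /nrm sqrtr_gt0.
case/orP: xy => h.
  by have := nc_gt0 h; have := nc_ge0 y; nra.
by have := nc_gt0 h; have := nc_ge0 x; nra.
Qed.

Lemma nrm_lb x y : (nc x + nc y) / 2 <= nrm x y.
Proof.
have hx := nc_ge0 x; have hy := nc_ge0 y.
rewrite -(sqrt_sq (_ : 0 <= (nc x + nc y) / 2)); last by lra.
rewrite /nrm ler_wsqrtr //; nra.
Qed.

Lemma nrm_ub1 x y : nc x <= nrm x y.
Proof.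
have hx := nc_ge0 x; have hy := nc_ge0 y.
rewrite -(sqrt_sq hx) /nrm ler_wsqrtr //; nra.
Qed.

Lemma sq1_nrm (u : C) : Num.sqrt (1 + nc u ^+ 2) = nrm u 1.
Proof. by rewrite /nrm normc1 expr1n addrC. Qed.

Lemma chord_proj (a1 a2 b1 b2 : C) : (a1 != 0) || (a2 != 0) -> (b1 != 0) || (b2 != 0) ->
  chord (proj a1 a2) (proj b1 b2) = 2 * nc (a1 * b2 - a2 * b1) / (nrm a1 a2 * nrm b1 b2).
Proof.
move=> ha hb.
have NA := nrm_gt0 ha; have NB := nrm_gt0 hb.
have key : forall x y : C, y != 0 -> nrm (x / y) 1 = nrm x y / nc y.
  move=> x y y0; have Y := nc_gt0 y0.
  apply: (@pexpIrn _ 2) => //; rewrite ?nnegrE ?nrm_ge0 ?divr_ge0 ?nrm_ge0 ?nc_ge0 //.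
  rewrite expr_div_n !nrm_sq normcM normcV normc1; field.
  by rewrite gt_eqF.
rewrite /proj.
case: (eqVneq a2 0) => [a20|a20]; case: (eqVneq b2 0) => [b20|b20] /=.
- rewrite a20 b20 !mul0r !mulr0 subrr normc0 mulr0 mul0r.
  by rewrite /chord.
- move: ha; rewrite a20 eqxx orbF => a10.
  rewrite nsq_nc sq1_nrm key // mul0r subr0 normcM.
  have A1 := nc_gt0 a10; have B2 := nc_gt0 b20.
  have -> : nrm a1 0 = nc a1 by rewrite /nrm normc0 expr0n addr0 sqrt_sq ?nc_ge0.
  by field; rewrite !gt_eqF // mulr_gt0.
- move: hb; rewrite b20 eqxx orbF => b10.
  rewrite nsq_nc sq1_nrm key // mulr0 sub0r normcN normcM.
  have A2 := nc_gt0 a20; have B1 := nc_gt0 b10.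
  have -> : nrm b1 0 = nc b1 by rewrite /nrm normc0 expr0n addr0 sqrt_sq ?nc_ge0.
  by field; rewrite !gt_eqF // mulr_gt0.
- rewrite !nsq_nc sqrt_sq ?nc_ge0 // sqrtrM ?addr_ge0 ?sqr_ge0 // !sq1_nrm !key //.
  have A2 := nc_gt0 a20; have B2 := nc_gt0 b20.
  have -> : a1 / a2 - b1 / b2 = (a1 * b2 - a2 * b1) / (a2 * b2) by field; rewrite a20 b20.
  rewrite normcM normcV normcM.
  by field; rewrite !gt_eqF // mulr_gt0.
Qed.

Lemma le_divs (a b c d : R) : 0 < b -> 0 < d -> a * d <= c * b -> a / b <= c / d.
Proof.
move=> b0 d0 h; rewrite ler_pdivrMr // mulrAC ler_pdivlMr //.
Qed.

Lemma nrm_ub2 x y : nc y <= nrm x y.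
Proof.
have hx := nc_ge0 x; have hy := nc_ge0 y.
rewrite -(sqrt_sq hy) /nrm ler_wsqrtr //; nra.
Qed.

Lemma nrm_ub x y : nrm x y <= nc x + nc y.
Proof.
have hx := nc_ge0 x; have hy := nc_ge0 y.
rewrite -(sqrt_sq (_ : 0 <= nc x + nc y)); last by lra.
rewrite /nrm ler_wsqrtr //; nra.
Qed.

Lemma chord_fin (w : C) (e : R) : 0 < e -> exists2 d : R, 0 < d &
  forall s, chord s (Some w) < d -> exists u, s = Some u /\ nc (u - w) < e.
Proof.
move=> e0; set W := nrm w 1.
have W1 : 1 <= W by have := nrm_ub2 w 1; rewrite normc1.
have Ww : nc w <= W by apply: nrm_ub1.
have W0 : 0 < W by lra.
exists (Num.min (1 / W) (2 * e / ((2 * W + e) * W))).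
  by rewrite lt_min !divr_gt0 ?mulr_gt0 //; lra.
case=> [u|]; rewrite lt_min => /andP [h1 h2].
  exists u; split => //.
  move: h2; rewrite /chord !nsq_nc sqrt_sq ?nc_ge0 // sqrtrM ?addr_ge0 ?sqr_ge0 //.
  rewrite !sq1_nrm -/W => h2.
  rewrite ltNge; apply/negP => hd.
  set dd := nc (u - w) in h2 hd.
  have U0 : 0 < nrm u 1 by apply: nrm_gt0; rewrite oner_eq0 orbT.
  have Uu : nrm u 1 <= 2 * W + dd.
    apply: le_trans (nrm_ub _ _) _; rewrite normc1.
    have := nc_triB u w; rewrite -/dd; lra.
  move: h2; apply/negP; rewrite -leNgt.
  apply: le_divs; rewrite ?mulr_gt0 //; first by lra.
  have h3 : e * nrm u 1 <= e * (2 * W + dd) by apply: ler_wpM2l => //; lra.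
  have h4 : e * W * W <= dd * W * W by rewrite -!mulrA; apply: ler_wpM2r => //; nra.
  have h5 : e * nrm u 1 * W <= e * (2 * W + dd) * W by apply: ler_wpM2r => //; lra.
  nra.
move: h1; rewrite /chord nsq_nc sq1_nrm -/W.
rewrite ltNge => /negP []; apply: le_divs => //; lra.
Qed.

Lemma chord_bound (a1 a2 b1 b2 : C) :
  0 < nc b1 + nc b2 -> nc (a1 - b1) + nc (a2 - b2) <= (nc b1 + nc b2) / 2 ->
  chord (proj a1 a2) (proj b1 b2) <= 16 * (nc (a1 - b1) + nc (a2 - b2)) / (nc b1 + nc b2).
Proof.
set Sb := nc b1 + nc b2; set Sd := nc (a1 - b1) + nc (a2 - b2) => Sb0 hd.
have eSb : Sb = nc b1 + nc b2 by []. have eSd : Sd = nc (a1 - b1) + nc (a2 - b2) by [].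
have t1 := nc_triB b1 a1; have t2 := nc_triB b2 a2.
rewrite nc_sub in t1; rewrite nc_sub in t2.
have g1 := nc_ge0 a1; have g2 := nc_ge0 a2; have g3 := nc_ge0 b1; have g4 := nc_ge0 b2.
have g5 := nc_ge0 (a1 - b1); have g6 := nc_ge0 (a2 - b2).
have ha : (a1 != 0) || (a2 != 0).
  apply/negPn/negP; rewrite negb_or !negbK => /andP [/eqP a10 /eqP a20].
  move: hd; rewrite /Sd a10 a20 !sub0r !normcN -/Sb; lra.
have hb : (b1 != 0) || (b2 != 0).
  apply/negPn/negP; rewrite negb_or !negbK => /andP [/eqP b10 /eqP b20].
  by move: Sb0; rewrite /Sb b10 b20 normc0; lra.
rewrite chord_proj //.
have NA := nrm_lb a1 a2; have NB := nrm_lb b1 b2.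
have X : nc (a1 * b2 - a2 * b1) <= Sd * Sb.
  have -> : a1 * b2 - a2 * b1 = (a1 - b1) * b2 - (a2 - b2) * b1 by ring.
  apply: le_trans (le_normcD _ _) _; rewrite normcN !normcM.
  rewrite /Sd /Sb; nra.
have X0 := nc_ge0 (a1 * b2 - a2 * b1).
have N1 : Sb / 4 <= nrm a1 a2 by lra.
have N2 : Sb / 2 <= nrm b1 b2 by lra.
have P : Sb / 4 * (Sb / 2) <= nrm a1 a2 * nrm b1 b2.
  apply: ler_pM; [lra|lra|exact: N1|exact: N2].
apply: le_divs => //; first by apply: mulr_gt0; lra.
have h1 : 2 * nc (a1 * b2 - a2 * b1) * Sb <= 2 * (Sd * Sb) * Sb.
  by apply: ler_wpM2r; lra.
have h2 : Sd * (Sb * Sb) <= Sd * (8 * (nrm a1 a2 * nrm b1 b2)).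
  by apply: ler_wpM2l; lra.
nra.
Qed.

End G.


Section H.
Variable R : realType.
Local Notation C := (R[i]).
Local Notation nc := (@normc R).

Lemma nc_sum (I : Type) (r : seq I) (F : I -> C) :
  nc (\sum_(i <- r) F i) <= \sum_(i <- r) nc (F i).
Proof.
elim: r => [|i r IH]; first by rewrite !big_nil normc0.
rewrite !big_cons; apply: le_trans (le_normcD _ _) _; exact: lerD.
Qed.

Lemma nc_pow (t : C) n : nc (t ^+ n) = nc t ^+ n.
Proof. by elim: n => [|n IH]; rewrite ?normc1 // !exprS normcM IH. Qed.

Definition cbound (P : {poly C}) : R := \sum_(i < size P) nc P`_i.

Lemma cbound_ge0 (P : {poly C}) : 0 <= cbound P.
Proof. by rewrite /cbound sumr_ge0 // => i _; apply: nc_ge0. Qed.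

Lemma horner_bound (P : {poly C}) (t : C) : nc t <= 1 -> nc P.[t] <= cbound P.
Proof.
move=> t1; rewrite horner_coef; apply: le_trans (nc_sum _ _) _.
rewrite /cbound; apply: ler_sum => i _; rewrite normcM nc_pow.
rewrite -[X in _ <= X]mulr1; apply: ler_wpM2l; first exact: nc_ge0.
by apply: exprn_ile1 => //; apply: nc_ge0.
Qed.

Lemma lower_bound (P Q : {poly C}) : (forall t, (P.[t] != 0) || (Q.[t] != 0)) ->
  exists2 m : R, 0 < m & forall t, nc t <= 1 -> m <= nc P.[t] + nc Q.[t].
Proof.
move=> h.
have cop : coprimep P Q.
  apply/Pdiv.ClosedField.coprimepP => x /eqP rx.
  by have := h x; rewrite rx eqxx.
have [[u1 u2] /= hu] := Bezout_coprimepP _ _ cop.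
set W := u1 * P + u2 * Q in hu.
have sW : size W = 1%N by apply/eqP; rewrite size_poly_eq1.
have eW := size1_polyC (eq_leq sW).
set c := W`_0 in eW.
have c0 : c != 0.
  apply/eqP => c0; move: sW; rewrite eW c0 size_poly0 //.
set K := cbound u1 + cbound u2 + 1.
have K0 : 0 < K by have := cbound_ge0 u1; have := cbound_ge0 u2; rewrite /K; lra.
exists (nc c / K); first by rewrite divr_gt0 // nc_gt0.
move=> t t1.
have ev : u1.[t] * P.[t] + u2.[t] * Q.[t] = c.
  by have := congr1 (fun p => p.[t]) eW; rewrite /W hornerD !hornerM hornerC.
rewrite ler_pdivrMr //.
rewrite -ev; apply: le_trans (le_normcD _ _) _; rewrite !normcM.
have b1 := horner_bound u1 t1; have b2 := horner_bound u2 t1.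
have g1 := nc_ge0 P.[t]; have g2 := nc_ge0 Q.[t].
have g3 := nc_ge0 u1.[t]; have g4 := nc_ge0 u2.[t].
have g5 := cbound_ge0 u1; have g6 := cbound_ge0 u2.
have h1 : nc u1.[t] * nc P.[t] <= cbound u1 * nc P.[t] by apply: ler_wpM2r.
have h2 : nc u2.[t] * nc Q.[t] <= cbound u2 * nc Q.[t] by apply: ler_wpM2r.
have h3 : 0 <= cbound u1 * nc Q.[t] by apply: mulr_ge0.
have h4 : 0 <= cbound u2 * nc P.[t] by apply: mulr_ge0.
rewrite /K; nra.
Qed.

Definition revp' (D : nat) (P : {poly C}) : {poly C} := \poly_(k < D.+1) P`_(D - k).

Lemma hev_rev D (P : {poly C}) (t : C) : hev D P 1 t = (revp' D P).[t].
Proof.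
rewrite (horner_coef_wide _ (size_poly _ _)) /hev (reindex_inj rev_ord_inj) /=.
apply: eq_bigr => k _; rewrite coef_poly ltn_ord expr1n mulr1.
by rewrite subKn // -ltnS.
Qed.

Lemma hev_bound D (P : {poly C}) (x y : C) : nc x <= 1 -> nc y <= 1 ->
  nc (hev D P x y) <= \sum_(k < D.+1) nc P`_k.
Proof.
move=> hx hy; apply: le_trans (nc_sum _ _) _; apply: ler_sum => k _.
rewrite !normcM !nc_pow -mulrA; apply: ler_piMr; first exact: nc_ge0.
apply: mulr_ile1; rewrite ?exprn_ge0 ?exprn_ile1 ?nc_ge0 //.
Qed.

Lemma hevB D (P Q : {poly C}) (x y : C) : hev D (P - Q) x y = hev D P x y - hev D Q x y.
Proof. by rewrite hevD -scaleN1r hevZ mulN1r. Qed.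

Lemma norm_lift (s : sphere R) : exists x y : C,
  [/\ (x != 0) || (y != 0), proj x y = s, nc x <= 1, nc y <= 1 &
     (y = 1) \/ (x = 1)].
Proof.
case: s => [u|]; last first.
  exists 1, 0; split; rewrite ?oner_eq0 ?normc1 ?normc0 //; last by right.
  by rewrite /proj eqxx.
case: (lerP (nc u) 1) => hu.
  exists u, 1; split; rewrite ?oner_eq0 ?orbT ?normc1 //; last by left.
  by rewrite /proj oner_eq0 divr1.
have u0 : u != 0 by apply/eqP => u0; move: hu; rewrite u0 normc0; lra.
exists 1, u^-1; split; rewrite ?oner_eq0 ?normc1 //; last by right.
  by rewrite /proj invr_eq0 u0 div1r invrK.
rewrite normcV invf_le1 ?nc_gt0 //; lra.
Qed.

End H.


Section M.
Variable R : realType.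
Local Notation C := (R[i]).
Local Notation nc := (@normc R).

Lemma fin_max (I : finType) (P : I -> nat -> Prop) :
  (forall i N M, (N <= M)%N -> P i N -> P i M) -> (forall i, exists N, P i N) ->
  exists N, forall i, P i N.
Proof.
move=> mono h.
suff [N hN] : exists N, forall i, i \in enum I -> P i N.
  by exists N => i; apply: hN; rewrite mem_enum.
elim: (enum I) => [|i s [N hN]]; first by exists 0%N.
have [M hM] := h i; exists (maxn N M) => j; rewrite in_cons => /orP [/eqP ->|hj].
  by apply: mono hM; rewrite leq_maxr.
by apply: mono (hN _ hj); rewrite leq_maxl.
Qed.

Definition gm (p1 f p2 : nat -> ratmap R) n (s : sphere R) :=
  ev (p2 n) (ev (f n) (ev (mobinv (p1 n)) s)).

Lemma core (fv0 : ratmap R) (f p1 p2 : nat -> ratmap R) (L : seq C) (D : nat) :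
  is_ratmap fv0 -> rdeg fv0 = D ->
  (forall n, is_ratmap (f n) /\ rdeg (f n) = D) ->
  (forall n, is_mobius (p1 n)) -> (forall n, is_mobius (p2 n)) ->
  (forall z : C, z \notin L -> forall eps : R, 0 < eps -> exists N, forall n, (N <= n)%N ->
     chord (gm p1 f p2 n (Some z)) (ev fv0 (Some z)) < eps) ->
  unif_conv (gm p1 f p2) (ev fv0).
Proof.
move=> hfv hD hf m1 m2 hpt.
have D0 : (0 < D)%N by rewrite -hD; case/andP: hfv.
set p := fv0.1; set q := fv0.2.
have cop : coprimep p q by case/andP: hfv.
have hM : maxn (size p) (size q) = D.+1 by rewrite -hD; apply: rdeg_max; rewrite hD.
have q0 : q != 0.
  apply/eqP => q0; move: cop; rewrite q0 coprimep0 -size_poly_eq1 => /eqP s1.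
  by move: hM; rewrite q0 size_poly0 s1 maxn0 => -[] e; rewrite -e in D0.
have p0 : p != 0.
  apply/eqP => p0; move: cop; rewrite p0 coprime0p -size_poly_eq1 => /eqP s1.
  by move: hM; rewrite p0 size_poly0 s1 max0n => -[] e; rewrite -e in D0.
have sp : (size p <= D.+1)%N by rewrite -hM leq_maxl.
have sq : (size q <= D.+1)%N by rewrite -hM leq_maxr.
have [zs [szs uzs hzs]] := pick_pts L (D + D).+1 q0.
pose zf j := nth 0 zs j.
have hzf : forall j, (j < (D + D).+1)%N -> (zf j \notin L) && (q.[zf j] != 0).
  by move=> j hj; apply: hzs; rewrite mem_nth // szs.
pose wl j := p.[zf j] / q.[zf j].
pose wn n j := if gm p1 f p2 n (Some (zf j)) is Some u then u else 0.
have hw : forall j, (j < (D + D).+1)%N -> forall e : R, 0 < e -> exists N, forall n, (N <= n)%N ->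
    gm p1 f p2 n (Some (zf j)) = Some (wn n j) /\ nc (wn n j - wl j) < e.
  move=> j hj e e0.
  have [hL hq] := andP (hzf j hj).
  have [d d0 hd] := chord_fin (wl j) e0.
  have [N hN] := hpt _ hL d d0.
  exists N => n hn; have := hN n hn.
  have -> : ev fv0 (Some (zf j)) = Some (wl j) by rewrite /= /ev_fin hq.
  by move/hd => [u [eu hu]]; rewrite /wn eu.
have [Np hNp] : exists Np, forall j : 'I_((D + D).+1), forall n, (Np <= n)%N ->
    gm p1 f p2 n (Some (zf j)) = Some (wn n j).
  apply: (fin_max (P := fun (j : 'I_((D + D).+1)) N => forall n, (N <= n)%N ->
                      gm p1 f p2 n (Some (zf j)) = Some (wn n j))).
    by move=> j N M hNM h n hn; apply: h; exact: leq_trans hNM hn.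
  move=> j; have [N hN] := hw j (ltn_ord j) 1 ltr01.
  by exists N => n hn; exact: (hN n hn).1.
have cw : forall j, (j < (D + D).+1)%N -> cv (fun n => wn n j) (wl j).
  move=> j hj e e0; have [N hN] := hw j hj e e0.
  by exists N => n hn; exact: (hN n hn).2.
set cF := cvec D p q.
have [j0 hj0] : exists j0 : 'I_(D.+1 + D.+1), cF 0 j0 != 0.
  apply/existsP; apply: contraT; rewrite negb_exists => /forallP h.
  have c0 : cF = 0.
    by apply/rowP => k; rewrite [RHS]mxE; apply/eqP; apply: negbNE; apply: h.
  have ep := @pa_cvec R D p q sp; rewrite -/cF c0 in ep.
  have : pa (0 : 'rV[C]_(D.+1 + D.+1)) = 0.
    by apply/polyP => k; rewrite coef_poly coef0; case: ifP; rewrite ?mxE.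
  by rewrite ep; move/eqP; rewrite (negPf p0).
pose Sl := Smat zf wl j0.
pose Sn n := Smat zf (wn n) j0.
have jlP : ((D + D).+1 < D.+1 + D.+1)%N by lia.
pose jl := Ordinal jlP.
have kern : forall c : 'rV[C]_(D.+1 + D.+1),
   (forall j, (j < (D + D).+1)%N -> (pa c).[zf j] - wl j * (pb c).[zf j] = 0) ->
   exists k, c = k *: cF.
  move=> c hc.
  have hz : forall z, z \in zs -> (pa c).[z] * q.[z] = (pb c).[z] * p.[z].
    move=> z hz; have hi : (index z zs < (D + D).+1)%N by rewrite -szs index_mem.
    have qz := (andP (hzs z hz)).2.
    have := hc _ hi; rewrite /zf nth_index // /wl => /eqP; rewrite subr_eq0 => /eqP ->.
    by rewrite /zf nth_index // mulrAC divfK // mulrC.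
  have [k [ea eb]] := @interp_unique R p q (pa c) (pb c) D zs cop hM D0 (size_poly _ _) (size_poly _ _) uzs szs hz.
  by exists k; rewrite -[c]cvecK ea eb cvecZ.
have uSl : Sl \in unitmx.
  apply: unit_of_inj => c hc.
  have [k ek] : exists k, c = k *: cF.
    apply: kern => j hj; have hjo : (j < D.+1 + D.+1)%N by lia.
    by have := congr1 (fun M : 'M[C]_(1, D.+1 + D.+1) => M 0 (Ordinal hjo)) hc; rewrite /Sl Smat_mul /= hj mxE.
  have := congr1 (fun M : 'M[C]_(1, D.+1 + D.+1) => M 0 jl) hc; rewrite /Sl Smat_mul /= ltnn mxE ek mxE => /eqP.
  by rewrite mulf_eq0 (negPf hj0) orbF => /eqP k0; rewrite k0 scale0r.
have cS : forall i j, cv (fun n => Sn n i j) (Sl i j).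
  move=> i j.
  apply: (cv_ev (u := fun n => if (j < (D + D).+1)%N then
     (if (i < D.+1)%N then zf j ^+ i else - wn n j * zf j ^+ (i - D.+1))
     else (i == j0)%:R) (N0 := 0)).
    by move=> n _; rewrite /Sn mxE.
  rewrite /Sl mxE; case: ifP => hj; last exact: cv_cst.
  case: ifP => _; first exact: cv_cst.
  apply: cv_mul; last exact: cv_cst.
  by apply: cv_opp; apply: cw.
have [N0 [uSn cinv]] := cv_invmx uSl cS.
pose e := \row_(j < D.+1 + D.+1) ((j == jl)%:R : C).
pose cn n := e *m invmx (Sn n).
pose cs := e *m invmx Sl.
have ccv : forall i, cv (fun n => cn n 0 i) (cs 0 i).
  move=> i; apply: (cv_ev (u := fun n => \sum_j e 0 j * invmx (Sn n) j i) (N0 := 0)).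
    by move=> n _; rewrite /cn mxE.
  rewrite /cs mxE; apply: cv_sum_seq => j; apply: cv_mul; [exact: cv_cst | exact: cinv].
have csS : cs *m Sl = e by rewrite /cs mulmxKV.
have [ks eks] : exists k, cs = k *: cF.
  apply: kern => j hj; have hjo : (j < D.+1 + D.+1)%N by lia.
  have := congr1 (fun M : 'M[C]_(1, D.+1 + D.+1) => M 0 (Ordinal hjo)) csS.
  rewrite /Sl Smat_mul /= hj mxE.
  have -> : (Ordinal hjo == jl) = false.
    by apply/negbTE/eqP => ej; have := congr1 val ej; rewrite /=; lia.
  by [].
have ks0 : ks != 0.
  have := congr1 (fun M : 'M[C]_(1, D.+1 + D.+1) => M 0 jl) csS.
  rewrite /Sl Smat_mul /= ltnn eks !mxE eqxx => h.
  by apply/eqP => k0; move: h; rewrite k0 mul0r => /eqP; rewrite eq_sym oner_eq0.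
have fvrel : forall x y, (x != 0) || (y != 0) ->
    ev fv0 (proj x y) = proj (hev D (pa cs) x y) (hev D (pb cs) x y).
  move=> x y xy; rewrite evP // hD eks pa_scale pb_scale pa_cvec // pb_cvec //.
  by rewrite !hevZ proj_scale.
have rel : forall n, (maxn N0 Np <= n)%N -> forall x y, (x != 0) || (y != 0) ->
    gm p1 f p2 n (proj x y) = proj (hev D (pa (cn n)) x y) (hev D (pb (cn n)) x y).
  move=> n hn x y xy.
  have hN0 : (N0 <= n)%N by apply: leq_trans hn; apply: leq_maxl.
  have hNp' : (Np <= n)%N by apply: leq_trans hn; apply: leq_maxr.
  have [hfn hrn] := hf n.
  have [A [B [sA sB hAB]]] := comp_form (m1 n) hfn (m2 n).
  rewrite hrn in sA sB hAB.
  set cAB := cvec D A B; set rho := cAB 0 j0.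
  have eq1 : cAB *m Sn n = rho *: e.
    apply/rowP => j; rewrite /Sn Smat_mul !mxE pa_cvec // pb_cvec //.
    case: ifP => hj.
      have -> : (j == jl) = false.
        by apply/negbTE/eqP => ej; move: hj; rewrite ej /= ltnn.
      rewrite mulr0.
      have h1 : (zf j != 0) || ((1 : C) != 0) by rewrite oner_eq0 orbT.
      have [eg _] := hAB (zf j) 1 h1.
      have ez : proj (zf j) 1 = Some (zf j) by rewrite /proj oner_eq0 divr1.
      have := hNp (Ordinal hj) n hNp'; rewrite /= -ez /gm eg.
      rewrite !hev_y1 // /proj; case: ifP => // hB [<-].
      by rewrite divfK // subrr.
    have ej : j = jl.
      apply: val_inj => /=; have := ltn_ord j; move/negbT: hj; rewrite -leqNgt; lia.
    by rewrite ej eqxx mulr1 /rho /cAB mxE.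
  have uS := uSn n hN0.
  have eq2 : cAB = rho *: cn n by rewrite /cn scalemxAl -eq1 mulmxK.
  have eA : A = rho *: pa (cn n).
    by rewrite -[A](@pa_cvec R D A B sA) -/cAB eq2 pa_scale.
  have eB : B = rho *: pb (cn n).
    by rewrite -[B](@pb_cvec R D A B sB) -/cAB eq2 pb_scale.
  have r0 : rho != 0.
    apply/eqP => r0; have h1 : ((1 : C) != 0) || ((0 : C) != 0) by rewrite oner_eq0.
    have [_] := hAB 1 0 h1.
    by rewrite eA eB r0 !scale0r !hev_x0 !coef0 !mul0r eqxx.
  have [eg _] := hAB x y xy.
  by rewrite /gm eg eA eB !hevZ proj_scale.
have hpq : forall t, (p.[t] != 0) || (q.[t] != 0).
  move=> t; have h1 : (t != 0) || ((1 : C) != 0) by rewrite oner_eq0 orbT.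
  by have := @Hm_neq0 R fv0 t 1 hfv h1; rewrite hD !hev_y1.
have [mA mA0 hmA] := lower_bound hpq.
have hrpq : forall t, ((revp' D p).[t] != 0) || ((revp' D q).[t] != 0).
  move=> t; have h1 : ((1 : C) != 0) || (t != 0) by rewrite oner_eq0.
  by have := @Hm_neq0 R fv0 1 t hfv h1; rewrite hD !hev_rev.
have [mB mB0 hmB] := lower_bound hrpq.
set mF := Num.min mA mB.
have mF0 : 0 < mF by rewrite lt_min mA0 mB0.
have hlow : forall x y : C, nc x <= 1 -> nc y <= 1 -> (y = 1 \/ x = 1) ->
    mF <= nc (hev D p x y) + nc (hev D q x y).
  move=> x y hx hy [->|->].
    by rewrite !hev_y1 //; apply: le_trans (hmA x hx); rewrite ge_min lexx.
  by rewrite !hev_rev; apply: le_trans (hmB y hy); rewrite ge_min lexx orbT.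
set mb := nc ks * mF.
have mb0 : 0 < mb by rewrite mulr_gt0 // nc_gt0.
move=> eps eps0.
set d' := Num.min (mb / 2) (eps * mb / 32).
have d'0 : 0 < d' by rewrite lt_min !divr_gt0 // mulr_gt0.
have d'1 : d' <= mb / 2 by rewrite ge_min lexx.
have d'2 : d' <= eps * mb / 32 by rewrite ge_min lexx orbT.
set dl := d' / (2 * (D.+1)%:R).
have dl0 : 0 < dl by rewrite divr_gt0 // mulr_gt0 // ltr0n.
have edl : dl *+ D.+1 = d' / 2.
  by rewrite /dl -mulr_natr; field; rewrite addrC natr1 pnatr_eq0.
have [Nc hNc] : exists Nc, forall i : 'I_(D.+1 + D.+1), forall n, (Nc <= n)%N ->
    nc (cn n 0 i - cs 0 i) < dl.
  apply: (fin_max (P := fun (i : 'I_(D.+1 + D.+1)) N => forall n, (N <= n)%N ->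
                      nc (cn n 0 i - cs 0 i) < dl)).
    by move=> i N M hNM h n hn; apply: h; exact: leq_trans hNM hn.
  by move=> i; apply: (ccv i dl dl0).
exists (maxn Nc (maxn N0 Np)) => n hn s.
have hnc : (Nc <= n)%N by apply: leq_trans hn; apply: leq_maxl.
have hnr : (maxn N0 Np <= n)%N by apply: leq_trans hn; apply: leq_maxr.
have [x [y [xy ps hx hy hxy]]] := norm_lift s.
rewrite -ps rel // fvrel //.
have epa : pa cs = ks *: p by rewrite eks pa_scale pa_cvec.
have epb : pb cs = ks *: q by rewrite eks pb_scale pb_cvec.
have Sb_lb : mb <= nc (hev D (pa cs) x y) + nc (hev D (pb cs) x y).
  rewrite epa epb !hevZ !normcM -mulrDr; apply: ler_wpM2l; first exact: nc_ge0.
  exact: hlow.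
have esum : dl *+ D.+1 = \sum_(k < D.+1) dl by rewrite sumr_const card_ord.
have Sa : nc (hev D (pa (cn n)) x y - hev D (pa cs) x y) <= d' / 2.
  rewrite -hevB; apply: le_trans (hev_bound _ _ hx hy) _.
  rewrite -edl esum; apply: ler_sum => k _.
  by rewrite coefB !coef_poly ltn_ord; apply: ltW; apply: hNc.
have Sb : nc (hev D (pb (cn n)) x y - hev D (pb cs) x y) <= d' / 2.
  rewrite -hevB; apply: le_trans (hev_bound _ _ hx hy) _.
  rewrite -edl esum; apply: ler_sum => k _.
  by rewrite coefB !coef_poly ltn_ord; apply: ltW; apply: hNc.
set B1 := nc (hev D (pa cs) x y) + nc (hev D (pb cs) x y) in Sb_lb *.
set S1 := nc (hev D (pa (cn n)) x y - hev D (pa cs) x y) +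
          nc (hev D (pb (cn n)) x y - hev D (pb cs) x y).
have S1d : S1 <= d' by rewrite /S1; lra.
have S10 : 0 <= S1 by rewrite /S1 addr_ge0 // nc_ge0.
apply: le_lt_trans (chord_bound _ _) _.
- by rewrite -/B1; lra.
- by rewrite -/B1 -/S1; lra.
rewrite -/B1 -/S1.
have : 16 * S1 / B1 <= 16 * d' / mb.
  apply: le_divs => //; first lra.
  have : S1 * mb <= d' * B1.
    apply: ler_pM => //; lra.
  nra.
move=> h; apply: le_lt_trans h _.
rewrite ltr_pdivrMr //; nra.
Qed.

End M.


Unset Implicit Arguments.
Local Close Scope ring_scope.

Theorem lemma4p12 (R : realType) (Y IY Z IZ : finType)
    (eY : rel (Y + IY)) (attY : IY -> Y + IY -> sphere R)
    (eZ : rel (Z + IZ)) (attZ : IZ -> Z + IZ -> sphere R)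
    (FY : Y -> Z) (FI : IY -> IZ) (fv : IY -> ratmap R) (dY : Y -> nat) (D : nat)
    (f : nat -> ratmap R) (y : nat -> Y -> sphere R) (z : nat -> Z -> sphere R)
    (phiY : nat -> IY -> ratmap R) (phiZ : nat -> IZ -> ratmap R) (v : IY) :
  is_sphere_tree eY attY -> is_sphere_tree eZ attZ ->
  is_cover eY attY eZ attZ FY FI fv dY D ->
  rdeg (fv v) = D ->
  converges_to eY attY eZ attZ FY FI fv dY D f y z phiY phiZ ->
  unif_conv (fun n s => ev (phiZ n (FI v)) (ev (f n) (ev (mobinv (phiY n v)) s)))
            (ev (fv v)).

Proof.
move=> _ _ hcov hD [hmk hcv].
have hfv : is_ratmap (fv v) by case: hcov => _ h _; exact: h.
have [mobY mobZ _ _ hloc] := hcv v.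
have hf : forall n, is_ratmap (f n) /\ rdeg (f n) = D by move=> n; case: (hmk n).
set L := pmap (fun s : sphere R => s) [seq attY v u | u <- enum {: Y + IY}].
apply: (@core R (fv v) f (fun n => phiY n v) (fun n => phiZ n (FI v)) L D hfv hD hf mobY mobZ).
move=> z0 zL eps eps0.
have nm : ~ marked_pts eY attY v (Some z0).
  case=> u hu eu; move: zL; rewrite mem_pmap map_id eu.
  by rewrite (map_f (attY v)) // mem_enum.
have [r r0 hr] := hloc (Some z0) nm.
have [N hN] := hr eps eps0.
by exists N => n hn; apply: hN => //; rewrite chord_refl.
Qed.
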